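(* Let $k\ge 2$ and let $G$ and $H$ be $\Gamma_{\times k,t}$-external graphs with $\delta(G)\ge k$ and $\delta(H)\ge k$. Then \[ \Gamma_{\times k,t}(G\,\Box\,H)\ge\max\{\Gamma_{\times k,t}(G)\cdot|V(H)|,\ \Gamma_{\times k,t}(H)\cdot|V(G)|\}. \]
   Context: A set $S\subseteq V(G)$ is a $k$-tuple total dominating set ($k$TDS) of a graph $G$ with $\delta(G)\ge k$ if $|N_G(x)\cap S|\ge k$ for every $x\in V(G)$. The upper $k$-tuple total domination number $\Gamma_{\times k,t}(G)$ is the maximum cardinality of a minimal (with respect to inclusion) $k$TDS of $G$; a minimal $k$TDS of this cardinality is a $\Gamma_{\times k,t}$-set. For $v\in S$, a vertex $v'$ is a $k$-open private neighbor of $v$ with respect to $S$ if $v\in N_G(v')$ and $|N_G(v')\cap S|=k$; it is external if $v'\notin S$. A graph $G$ is $\Gamma_{\times k,t}$-external if it has a $\Gamma_{\times k,t}$-set $S$ such that every vertex of $S$ has an external $k$-open private neighbor with respect to $S$. The Cartesian product $G\,\Box\,H$ has vertex set $V(G)\times V(H)$, with $(g_1,h_1)\sim(g_2,h_2)$ iff either $g_1=g_2$ and $h_1h_2\in E(H)$, or $h_1=h_2$ and $g_1g_2\in E(G)$. *)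

(* Defs.v *)
From HB Require Import structures.
From mathcomp Require Import all_boot.
Set Implicit Arguments. Unset Strict Implicit. Unset Printing Implicit Defensive.

Section Graphs.
Variable T : finType.
Variable e : rel T.

Definition simple_graph : Prop := symmetric e /\ irreflexive e.

Definition nbhd (x : T) : {set T} := [set y | e x y].

Definition min_deg_ge (k : nat) : Prop := forall x : T, k <= #|nbhd x|.

Definition is_kTDS (k : nat) (S : {set T}) : bool :=
  [forall x, k <= #|nbhd x :&: S|].

Definition is_minimal_kTDS (k : nat) (S : {set T}) : bool :=
  is_kTDS k S && [forall S' : {set T}, (S' \proper S) ==> ~~ is_kTDS k S'].

Definition upper_ktdn (k : nat) : nat :=
  \max_(S : {set T} | is_minimal_kTDS k S) #|S|.

Definition is_Gamma_set (k : nat) (S : {set T}) : bool :=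
  is_minimal_kTDS k S && (#|S| == upper_ktdn k).

Definition k_open_pn (k : nat) (S : {set T}) (v v' : T) : bool :=
  (v \in nbhd v') && (#|nbhd v' :&: S| == k).

Definition Gamma_external (k : nat) : Prop :=
  exists S : {set T}, is_Gamma_set k S /\
    forall v, v \in S -> exists v', (v' \notin S) && k_open_pn k S v v'.
End Graphs.

Definition box_rel (T1 T2 : finType) (e1 : rel T1) (e2 : rel T2) : rel (T1 * T2) :=
  fun p q => ((p.1 == q.1) && e2 p.2 q.2) || ((p.2 == q.2) && e1 p.1 q.1).

(* Main.v *)
Require Import Defs.
From mathcomp Require Import all_boot.

Lemma kTDS_up (T : finType) (e : rel T) k (A B : {set T}) :
  A \subset B -> is_kTDS e k A -> is_kTDS e k B.
Proof.
move=> AB /forallP H; apply/forallP=> x.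
apply: leq_trans (H x) _; apply: subset_leq_card; exact: setIS.
Qed.

Lemma minimal_of (T : finType) (e : rel T) k (S : {set T}) :
  is_kTDS e k S ->
  (forall x, x \in S -> ~~ is_kTDS e k (S :\ x)) ->
  is_minimal_kTDS e k S.
Proof.
move=> HS Hx; rewrite /is_minimal_kTDS HS /=; apply/forallP=> S'; apply/implyP=> Hp.
have [_ [x xS xS']] := properP Hp.
apply/negP=> HS'; move: (Hx x xS); rewrite (@kTDS_up _ e k S' (S :\ x)) //.
apply/subsetP=> y yS'; rewrite in_setD1 (subsetP (proper_sub Hp) _ yS') andbT.
by apply/eqP=> eyx; rewrite -eyx yS' in xS'.
Qed.

Lemma bound_of (T : finType) (e : rel T) k (S : {set T}) :
  is_minimal_kTDS e k S -> #|S| <= upper_ktdn e k.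
Proof. by move=> H; rewrite /upper_ktdn; apply: (leq_bigmax_cond (P := fun S => is_minimal_kTDS e k S)). Qed.

Lemma left_part (k : nat) (T1 T2 : finType) (e1 : rel T1) (e2 : rel T2) :
  Gamma_external e1 k -> upper_ktdn e1 k * #|T2| <= upper_ktdn (box_rel e1 e2) k.
Proof.
move=> [S [/andP [Hmin /eqP Hc] Hext]].
have /andP [HS _] := Hmin.
rewrite -Hc -cardsT -cardsX; apply: bound_of; apply: minimal_of.
- apply/forallP=> [[g h]].
  move/forallP: HS => /(_ g) Hg; apply: leq_trans Hg _.
  rewrite -(card_imset _ (f := fun a => (a, h))); last by move=> a b [].
  apply: subset_leq_card; apply/subsetP=> y /imsetP [a]; rewrite !inE => /andP [ga aS] ->.
  by rewrite /box_rel /= eqxx ga aS !orbT.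
- move=> [v h]; rewrite !inE andbT /= => vS.
  have /existsP := (Hext v vS) => _.
  case: (Hext v vS) => v' /andP [v'S /andP [vv' /eqP cv']].
  apply/negP=> /forallP /(_ (v', h)).
  apply/negP; rewrite -ltnNge.
  have sub1 : nbhd (box_rel e1 e2) (v', h) :&: setX S [set: T2] \subset
     (fun a => (a, h)) @: (nbhd e1 v' :&: S).
    apply/subsetP=> [[a b]]; rewrite !inE /box_rel /= andbT => /andP [/orP [/andP [/eqP <- _]|/andP [/eqP <- ea]] aS].
      by rewrite aS in v'S.
    by apply/imsetP; exists a => //; rewrite !inE ea aS.
  have := subset_leq_card sub1; rewrite card_imset; last by move=> a b [].
  rewrite cv' => Hle; apply: leq_trans Hle.
  apply: proper_card; apply/properP; split.
    apply/subsetP=> y; rewrite !inE => /andP [-> /andP [_ ->]]; by rewrite andbT.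
  exists (v, h).
    by rewrite !inE /box_rel /= eqxx vS -(in_set (fun y => e1 v' y)) andbT; move: vv'; rewrite !inE => ->; rewrite orbT.
  by rewrite !inE; apply/negP => /and4P [_ /eqP []].
Qed.

Lemma right_part (k : nat) (T1 T2 : finType) (e1 : rel T1) (e2 : rel T2) :
  Gamma_external e2 k -> upper_ktdn e2 k * #|T1| <= upper_ktdn (box_rel e1 e2) k.
Proof.
move=> [S [/andP [Hmin /eqP Hc] Hext]].
have /andP [HS _] := Hmin.
rewrite -Hc -cardsT mulnC -cardsX; apply: bound_of; apply: minimal_of.
- apply/forallP=> [[g h]].
  move/forallP: HS => /(_ h) Hg; apply: leq_trans Hg _.
  rewrite -(card_imset _ (f := fun a => (g, a))); last by move=> a b [].
  apply: subset_leq_card; apply/subsetP=> y /imsetP [a]; rewrite !inE => /andP [ga aS] ->.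
  by rewrite /box_rel /= eqxx ga aS.
- move=> [h v]; rewrite !inE /= => vS.
  case: (Hext v vS) => v' /andP [v'S /andP [vv' /eqP cv']].
  apply/negP=> /forallP /(_ (h, v')).
  apply/negP; rewrite -ltnNge.
  have sub1 : nbhd (box_rel e1 e2) (h, v') :&: setX [set: T1] S \subset
     (fun a => (h, a)) @: (nbhd e2 v' :&: S).
    apply/subsetP=> [[a b]]; rewrite !inE /box_rel /= => /andP [/orP [/andP [/eqP <- ea]|/andP [/eqP <- _]] aS].
      by apply/imsetP; exists b => //; rewrite !inE ea aS.
    by rewrite aS in v'S.
  have := subset_leq_card sub1; rewrite card_imset; last by move=> a b [].
  rewrite cv' => Hle; apply: leq_trans Hle.
  apply: proper_card; apply/properP; split.
    apply/subsetP=> y; rewrite !inE => /andP [-> /andP [_ ->]]; by [].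
  exists (h, v).
    by rewrite !inE /box_rel /= eqxx vS -(in_set (fun y => e2 v' y)); move: vv'; rewrite !inE => ->.
  by rewrite !inE; apply/negP => /and3P [_ /eqP []].
Qed.

Theorem mainTheorem10 (k : nat) (T1 T2 : finType) (e1 : rel T1) (e2 : rel T2) :
  2 <= k ->
  simple_graph e1 -> simple_graph e2 ->
  min_deg_ge e1 k -> min_deg_ge e2 k ->
  Gamma_external e1 k -> Gamma_external e2 k ->
  maxn (upper_ktdn e1 k * #|T2|) (upper_ktdn e2 k * #|T1|)
    <= upper_ktdn (box_rel e1 e2) k.
Proof.
move=> _ _ _ _ _ H1 H2; rewrite geq_max.
by rewrite (@left_part k T1 T2 e1 e2 H1) (@right_part k T1 T2 e1 e2 H2).
Qed.
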